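(* Let $p=p(n)$ satisfy $n^{-\frac{e-2}{3e-2}+\varepsilon}\leq p=o(1)$ for some constant $\varepsilon>0$. For real $k$ define $$\gamma(k)= -\tfrac{1}{2}\ln (2\pi) +k\ln n + k - \tfrac{5}{2} \ln k + (k-1) \ln \frac{p}{1-p} - \binom{k}{2} \ln \frac{1}{1-p},\qquad \binom k2=\frac{k(k-1)}2 .$$ Then, for all sufficiently large $n$, the equation $\gamma(k)=0$ has a unique solution $\hat k=\hat k(n)$ with $1\ll \hat k = o(\sqrt n)$, and $$\hat{k}=2\log_{1/(1-p)}(enp)+ \frac{3\ln p}{2\ln(np)} + 3 + o(1).$$ Moreover, for integers $k$ with $1\ll k\ll\sqrt n$, one has $\mathbb{E}X_k=(1+o(1))e^{\gamma(k)}$.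
   Context: $G(n,p)$ is the binomial random graph on $[n]$ (each pair an edge independently with probability $p$). $X_k$ denotes the number of $k$-element subsets $U\subseteq[n]$ whose induced subgraph in $G(n,p)$ is a tree; thus $\mathbb{E}X_k=\binom nk k^{k-2}p^{k-1}(1-p)^{\binom k2-k+1}$. *)

(* Defs.v *)
From Stdlib Require Import Reals Lra Lia Factorial.
From Coquelicot Require Import Coquelicot.
Open Scope R_scope.

Definition binom (n k : nat) : R :=
  if Nat.leb k n then INR (fact n) / (INR (fact k) * INR (fact (n - k))) else 0.

(* E X_k = C(n,k) k^{k-2} p^{k-1} (1-p)^{C(k,2)-k+1}, the expected number of
   k-sets inducing a tree in G(n,p) (formula given in the paper's context).
   The exponent C(k,2)-k+1 = (k-1)(k-2)/2 is a natural number. *)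
Definition EX (n : nat) (p : R) (k : nat) : R :=
  binom n k * INR k ^ (k - 2) * p ^ (k - 1)
  * (1 - p) ^ (Nat.div (k * (k - 1)) 2 + 1 - k).

Definition gamma (n : nat) (p : R) (k : R) : R :=
  - (1/2) * ln (2 * PI) + k * ln (INR n) + k - (5/2) * ln k
  + (k - 1) * ln (p / (1 - p)) - (k * (k - 1) / 2) * ln (1 / (1 - p)).

Definition logb (b x : R) : R := ln x / ln b.

Definition khat_approx (n : nat) (p : R) : R :=
  2 * logb (1 / (1 - p)) (exp 1 * INR n * p)
  + 3 * ln p / (2 * ln (INR n * p)) + 3.

(* Main.v *)
Require Import Defs.
From Stdlib Require Import Reals Lra Lia Factorial Rsqrt_def Ranalysis5 ClassicalEpsilon.
From Coquelicot Require Import Coquelicot.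
Open Scope R_scope.

Lemma mvt_nonneg (f df : R -> R) (a b : R) :
  a <= b ->
  (forall y, a <= y <= b -> is_derive f y (df y)) ->
  (forall y, a <= y <= b -> 0 <= df y) -> f a <= f b.
Proof.
  intros Hab Hd Hpos.
  destruct (MVT_gen f a b df) as [c [Hc Heq]].
  - intros y Hy. rewrite Rmin_left in Hy by lra. rewrite Rmax_right in Hy by lra.
    apply Hd; lra.
  - intros y Hy. rewrite Rmin_left in Hy by lra. rewrite Rmax_right in Hy by lra.
    apply continuity_pt_filterlim. apply (ex_derive_continuous (V:=R_NormedModule)). eexists. apply Hd; lra.
  - rewrite Rmin_left in Hc by lra. rewrite Rmax_right in Hc by lra.
    assert (0 <= df c) by (apply Hpos; lra). nra.
Qed.

Lemma ln_ratio_lower (x : R) : 0 <= x < 1 -> 2 * x <= ln (1 + x) - ln (1 - x).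
Proof.
  intros Hx.
  set (f := fun y => ln (1 + y) - ln (1 - y) - 2 * y).
  assert (f 0 <= f x).
  { apply (mvt_nonneg f (fun y => / (1 + y) + / (1 - y) - 2)); try lra.
    - intros y Hy. unfold f. auto_derive.
      + repeat split; lra.
      + field. lra.
    - intros y Hy.
      assert (/ (1 + y) + / (1 - y) - 2 = 2 * y^2 / ((1+y)*(1-y))) by (field; lra).
      rewrite H. apply Rmult_le_pos.
      + nra.
      + apply Rlt_le, Rinv_0_lt_compat. nra. }
  unfold f in H. rewrite Rplus_0_r, Rminus_0_r, ln_1 in H. lra.
Qed.

Lemma ln_ratio_upper (x : R) : 0 <= x < 1 ->
  ln (1 + x) - ln (1 - x) <= 2 * x + (2/3) * x^3 / (1 - x^2).
Proof.
  intros Hx.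
  set (f := fun y => 2 * y + (2/3) * y^3 / (1 - y^2) - (ln (1 + y) - ln (1 - y))).
  assert (f 0 <= f x).
  { apply (mvt_nonneg f (fun y => (4/3) * y^4 / (1 - y^2)^2)); try lra.
    - intros y Hy. unfold f. auto_derive.
      + repeat split; nra.
      + field. repeat split; nra.
    - intros y Hy. apply Rmult_le_pos.
      + nra.
      + apply Rlt_le, Rinv_0_lt_compat. apply pow_lt. nra. }
  unfold f in H. rewrite Rplus_0_r, Rminus_0_r, ln_1 in H.
  replace ((2/3) * 0^3 / (1 - 0^2)) with 0 in H by (simpl; field). lra.
Qed.

Definition la (k : nat) : R :=
  ln (INR (fact k)) + INR k - (INR k + 1/2) * ln (INR k).

Lemma INR_fact_pos k : 0 < INR (fact k).
Proof. apply lt_0_INR, lt_O_fact. Qed.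

Lemma la_diff (k : nat) : (1 <= k)%nat ->
  la k - la (S k) = (INR k + 1/2) * (ln (INR k + 1) - ln (INR k)) - 1.
Proof.
  intros Hk. unfold la.
  assert (Hkp : 0 < INR k) by (apply lt_0_INR; lia).
  replace (INR (fact (S k))) with (INR (S k) * INR (fact k))
    by (rewrite <- mult_INR; reflexivity).
  rewrite ln_mult by (try apply INR_fact_pos; apply lt_0_INR; lia).
  rewrite S_INR. ring.
Qed.

Lemma la_diff_bounds (k : nat) : (1 <= k)%nat ->
  0 <= la k - la (S k) <= 1 / (12 * INR k) - 1 / (12 * (INR k + 1)).
Proof.
  intros Hk. rewrite la_diff by exact Hk.
  assert (Hkp : 0 < INR k) by (apply lt_0_INR; lia).
  set (x := 1 / (2 * INR k + 1)).
  assert (Hx : 0 <= x < 1).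
  { unfold x. split.
    - apply Rlt_le, Rdiv_lt_0_compat; lra.
    - apply (Rmult_lt_reg_r (2 * INR k + 1)); [lra|].
      unfold Rdiv; rewrite Rmult_assoc, Rinv_l by lra. lra. }
  assert (Heq : ln (1 + x) - ln (1 - x) = ln (INR k + 1) - ln (INR k)).
  { replace (1 + x) with ((INR k + 1) / (INR k + 1/2)) by (unfold x; field; lra).
    replace (1 - x) with (INR k / (INR k + 1/2)) by (unfold x; field; lra).
    rewrite !ln_div by lra. ring. }
  rewrite <- Heq.
  pose proof (ln_ratio_lower x Hx). pose proof (ln_ratio_upper x Hx).
  assert (H2 : (INR k + 1/2) * (2 * x) = 1) by (unfold x; field; lra).
  assert (H3 : (INR k + 1/2) * ((2/3) * x^3 / (1 - x^2)) =
               1 / (12 * INR k) - 1 / (12 * (INR k + 1)) ).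
  { unfold x. field. repeat split; try lra. nra. }
  split.
  - assert (0 <= (INR k + 1/2) * (ln (1 + x) - ln (1 - x) - 2 * x)).
    { apply Rmult_le_pos; lra. }
    nra.
  - assert ((INR k + 1/2) * (ln (1 + x) - ln (1 - x)) <=
            (INR k + 1/2) * (2 * x + (2/3) * x^3 / (1 - x^2))).
    { apply Rmult_le_compat_l; lra. }
    rewrite Rmult_plus_distr_l in H1. lra.
Qed.

Lemma la_1 : la 1 = 1.
Proof. unfold la. simpl. rewrite ln_1. ring. Qed.

Definition us (n : nat) : R := la (S n).

Lemma us_decr n : us (S n) <= us n.
Proof. unfold us. pose proof (la_diff_bounds (S n) ltac:(lia)). lra. Qed.

Lemma us_lower n : us n - 1 / (12 * INR (S n)) >= 1 - 1/12.
Proof.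
  induction n.
  - unfold us. rewrite la_1. simpl. lra.
  - unfold us in *. pose proof (la_diff_bounds (S n) ltac:(lia)).
    rewrite (S_INR (S n)). lra.
Qed.

Lemma us_bounds n : 11/12 <= us n <= 1.
Proof.
  split.
  - pose proof (us_lower n).
    assert (0 <= 1 / (12 * INR (S n))).
    { apply Rlt_le, Rdiv_lt_0_compat; [lra|]. apply Rmult_lt_0_compat; [lra|].
      apply lt_0_INR; lia. }
    lra.
  - induction n.
    + unfold us. rewrite la_1. lra.
    + pose proof (us_decr n). lra.
Qed.

Lemma us_conv : exists Lc : R, is_lim_seq us Lc.
Proof.
  assert (ex_finite_lim_seq us).
  { apply (ex_finite_lim_seq_decr us (11/12)). apply us_decr.
    intros n; apply us_bounds. }
  destruct H as [l Hl]. exists l. exact Hl.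
Qed.

Definition Iw (n : nat) : R := RInt (fun x => sin x ^ n) 0 (PI/2).

Lemma cont_sinpow n z : continuous (fun x => sin x ^ n) z.
Proof. apply (ex_derive_continuous (V:=R_NormedModule)). auto_derive. auto. Qed.

Lemma ex_RInt_sinpow n a b : ex_RInt (fun x => sin x ^ n) a b.
Proof. apply (ex_RInt_continuous (V:=R_CompleteNormedModule)). intros; apply cont_sinpow. Qed.

Lemma Iw_rec n : (INR n + 2) * Iw (n + 2) = (INR n + 1) * Iw n.
Proof.
  set (F := fun x => cos x * sin x ^ (n + 1)).
  set (g := fun x => (INR n + 1) * sin x ^ n - (INR n + 2) * sin x ^ (n + 2)).
  assert (HI : is_RInt g 0 (PI/2) (minus (F (PI/2)) (F 0))).
  { apply (is_RInt_derive (V:=R_CompleteNormedModule)).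
    - intros x _. unfold F, g. auto_derive; [auto|].
      replace (Init.Nat.pred (n + 1)) with n by lia.
      rewrite !pow_add, plus_INR. simpl INR.
      pose proof (sin2_cos2 x) as Hsc. unfold Rsqr in Hsc.
      replace (cos x * (1 * cos x * ((INR n + 1) * sin x ^ n)))
        with ((cos x * cos x) * ((INR n + 1) * sin x ^ n)) by ring.
      replace (cos x * cos x) with (1 - sin x * sin x) by lra. ring.
    - intros x _. unfold g. apply (ex_derive_continuous (V:=R_NormedModule)). auto_derive. auto. }
  apply (is_RInt_unique (V:=R_CompleteNormedModule)) in HI.
  assert (HF : minus (F (PI / 2)) (F 0) = 0).
  { unfold F. rewrite cos_PI2, sin_0, cos_0. rewrite pow_i by lia.
    unfold minus, plus, opp; simpl. ring. }
  rewrite HF in HI.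
  assert (Hs : forall (c : R) m, RInt (fun x => c * sin x ^ m) 0 (PI/2) = c * Iw m).
  { intros c m. unfold Iw.
    exact (RInt_scal (V:=R_CompleteNormedModule) (fun x => sin x ^ m) 0 (PI/2) c (ex_RInt_sinpow m 0 (PI/2))). }
  assert (Hm : RInt g 0 (PI/2) = (INR n + 1) * Iw n - (INR n + 2) * Iw (n + 2)).
  { rewrite <- (Hs (INR n + 1) n), <- (Hs (INR n + 2) (n + 2)%nat).
    apply (RInt_minus (V:=R_CompleteNormedModule) (fun x => (INR n + 1) * sin x ^ n) (fun x => (INR n + 2) * sin x ^ (n + 2))).
    - apply (ex_RInt_continuous (V:=R_CompleteNormedModule)). intros; apply (ex_derive_continuous (V:=R_NormedModule)). auto_derive. auto.
    - apply (ex_RInt_continuous (V:=R_CompleteNormedModule)). intros; apply (ex_derive_continuous (V:=R_NormedModule)). auto_derive. auto. }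
  lra.
Qed.

Lemma Iw_0 : Iw 0 = PI / 2.
Proof.
  unfold Iw. simpl pow. rewrite (RInt_const (V:=R_CompleteNormedModule)).
  unfold scal; simpl; unfold mult; simpl. ring.
Qed.

Lemma Iw_1 : Iw 1 = 1.
Proof.
  unfold Iw.
  rewrite (RInt_ext (V:=R_CompleteNormedModule) _ sin) by (intros; simpl; ring).
  apply (is_RInt_unique (V:=R_CompleteNormedModule)).
  replace 1 with (minus (- cos (PI/2)) (- cos 0)).
  2:{ rewrite cos_PI2, cos_0. unfold minus, plus, opp; simpl. ring. }
  apply (is_RInt_derive (V:=R_CompleteNormedModule) (fun x => - cos x)).
  - intros x _. auto_derive; auto. ring.
  - intros x _. apply (ex_derive_continuous (V:=R_NormedModule)). auto_derive. auto.
Qed.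

Lemma Iw_decr n : Iw (S n) <= Iw n.
Proof.
  unfold Iw. apply RInt_le.
  - pose proof PI_RGT_0. lra.
  - apply ex_RInt_sinpow.
  - apply ex_RInt_sinpow.
  - intros x Hx. pose proof PI_RGT_0.
    assert (0 <= sin x) by (apply sin_ge_0; lra).
    assert (sin x <= 1) by apply (proj2 (SIN_bound x)).
    assert (0 <= sin x ^ n) by (apply pow_le; lra).
    simpl. nra.
Qed.

Definition cw (m : nat) : R := INR (fact (2 * m)) / (4 ^ m * INR (fact m) ^ 2).

Lemma cw_pos m : 0 < cw m.
Proof.
  unfold cw. apply Rdiv_lt_0_compat. apply lt_0_INR, lt_O_fact.
  apply Rmult_lt_0_compat. apply pow_lt; lra. apply pow_lt, lt_0_INR, lt_O_fact.
Qed.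

Lemma cw_S m : cw (S m) = cw m * (2 * INR m + 1) / (2 * INR m + 2).
Proof.
  unfold cw.
  replace (2 * S m)%nat with (S (S (2 * m))) by lia.
  replace (fact (S (S (2 * m)))) with (S (S (2 * m)) * (S (2 * m) * fact (2 * m)))%nat by reflexivity.
  replace (fact (S m)) with (S m * fact m)%nat by reflexivity.
  rewrite !mult_INR, !S_INR, mult_INR. simpl INR.
  assert (0 < INR (fact m)) by apply lt_0_INR, lt_O_fact.
  pose proof (pos_INR m).
  simpl pow. field. repeat split; try lra. apply pow_nonzero. lra.
Qed.

Lemma Iw_even m : Iw (2 * m) = PI / 2 * cw m.
Proof.
  induction m.
  - simpl. rewrite Iw_0. unfold cw. simpl. field.
  - pose proof (Iw_rec (2 * m)).
    replace (2 * S m)%nat with (2 * m + 2)%nat by lia.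
    rewrite mult_INR in H. replace (INR 2) with 2 in H by (simpl; ring). rewrite cw_S.
    pose proof (pos_INR m).
    apply (Rmult_eq_reg_l (2 * INR m + 2)); [|lra].
    rewrite H, IHm. field. lra.
Qed.

Lemma Iw_odd m : Iw (2 * m + 1) * ((2 * INR m + 1) * cw m) = 1.
Proof.
  induction m.
  - simpl. rewrite Iw_1. unfold cw. simpl. field.
  - pose proof (Iw_rec (2 * m + 1)).
    replace (2 * S m + 1)%nat with (2 * m + 1 + 2)%nat by lia.
    rewrite plus_INR, mult_INR in H. replace (INR 2) with 2 in H by (simpl; ring). replace (INR 1) with 1 in H by (simpl; ring). rewrite cw_S, S_INR.
    pose proof (pos_INR m).
    replace (Iw (2 * m + 1 + 2)) with ((2 * INR m + 2) * Iw (2 * m + 1) / (2 * INR m + 3)).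
    2:{ apply (Rmult_eq_reg_l (2 * INR m + 1 + 2)); [|lra]. rewrite H. field. lra. }
    transitivity (Iw (2 * m + 1) * ((2 * INR m + 1) * cw m)); [field; lra | exact IHm].
Qed.

Lemma cw_bounds m :
  2 / PI <= (2 * INR m + 1) * cw m ^ 2 <= 2 / PI * (1 + 1 / (2 * INR m + 1)).
Proof.
  pose proof (cw_pos m) as Hc. pose proof (pos_INR m) as Hm. pose proof PI_RGT_0 as Hpi.
  pose proof (Iw_odd m) as Ho. pose proof (Iw_even m) as He.
  pose proof (Iw_decr (2 * m)) as D1.
  pose proof (Iw_decr (2 * m + 1)) as D2.
  replace (S (2 * m)) with (2 * m + 1)%nat in D1 by lia.
  replace (S (2 * m + 1)) with (2 * S m)%nat in D2 by lia.
  rewrite Iw_even, cw_S in D2. rewrite He in D1.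
  assert (Hio : Iw (2 * m + 1) = 1 / ((2 * INR m + 1) * cw m)).
  { apply (Rmult_eq_reg_r ((2 * INR m + 1) * cw m)). rewrite Ho. field. lra.
    apply Rgt_not_eq. apply Rmult_lt_0_compat; lra. }
  rewrite Hio in D1, D2.
  split.
  -
    apply (Rmult_le_reg_r (PI / 2 * / ((2 * INR m + 1) * cw m))).
    { apply Rmult_lt_0_compat. lra. apply Rinv_0_lt_compat, Rmult_lt_0_compat; lra. }
    replace (2 / PI * (PI / 2 * / ((2 * INR m + 1) * cw m))) with (1 / ((2 * INR m + 1) * cw m)) by (field; split; lra).
    replace ((2 * INR m + 1) * cw m ^ 2 * (PI / 2 * / ((2 * INR m + 1) * cw m))) with (PI / 2 * cw m) by (field; split; lra).
    exact D1.
  -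
    apply (Rmult_le_reg_r (PI / 2 * (2 * INR m + 1) / (2 * INR m + 2) / ((2 * INR m + 1) * cw m))).
    { apply Rdiv_lt_0_compat; [|apply Rmult_lt_0_compat; lra].
      apply Rdiv_lt_0_compat; [|lra]. apply Rmult_lt_0_compat; lra. }
    replace ((2 * INR m + 1) * cw m ^ 2 *
     (PI / 2 * (2 * INR m + 1) / (2 * INR m + 2) /
      ((2 * INR m + 1) * cw m))) with (PI / 2 * (cw m * (2 * INR m + 1) / (2 * INR m + 2)))
      by (field; split; lra).
    replace (2 / PI * (1 + 1 / (2 * INR m + 1)) *
     (PI / 2 * (2 * INR m + 1) / (2 * INR m + 2) /
      ((2 * INR m + 1) * cw m))) with (1 / ((2 * INR m + 1) * cw m))
      by (field; repeat split; lra).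
    exact D2.
Qed.

Lemma cont_ln x : 0 < x -> continuity_pt ln x.
Proof.
  intros Hx. apply continuity_pt_filterlim.
  apply (ex_derive_continuous (V:=R_NormedModule)). auto_derive. exact Hx.
Qed.

Lemma cont_exp x : continuity_pt exp x.
Proof.
  apply continuity_pt_filterlim.
  apply (ex_derive_continuous (V:=R_NormedModule)). auto_derive. auto.
Qed.

Lemma ln_wallis_id m : (1 <= m)%nat ->
  ln ((2 * INR m + 1) * cw m ^ 2) =
  ln (2 + 1 / INR m) + ln 2 + 2 * la (2 * m) - 4 * la m.
Proof.
  intros Hm.
  assert (Hmp : 0 < INR m) by (apply lt_0_INR; lia).
  pose proof (cw_pos m) as Hc.
  rewrite ln_mult by (try lra; apply pow_lt; lra).
  rewrite ln_pow by lra.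
  unfold cw, la.
  assert (0 < INR (fact m)) by apply lt_0_INR, lt_O_fact.
  assert (0 < INR (fact (2 * m))) by apply lt_0_INR, lt_O_fact.
  rewrite ln_div by (try lra; apply Rmult_lt_0_compat; apply pow_lt; lra).
  rewrite ln_mult by (apply pow_lt; lra).
  rewrite !ln_pow by lra.
  rewrite mult_INR. replace (INR 2) with 2 by (simpl; ring).
  rewrite ln_mult by lra.
  replace (2 + 1 / INR m) with ((2 * INR m + 1) / INR m) by (field; lra).
  rewrite ln_div by lra.
  replace 4 with (2 * 2) at 1 by ring. rewrite ln_mult by lra.
  simpl INR. field.
Qed.

Lemma lim_scal (u : nat -> R) (a l : R) : is_lim_seq u l -> is_lim_seq (fun n => a * u n) (a * l).
Proof. intros H. apply (is_lim_seq_mult' _ _ a l). apply is_lim_seq_const. exact H. Qed.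

Definition c0 : R := 1/2 * ln (2 * PI).

Lemma us_lim : is_lim_seq us c0.
Proof.
  destruct us_conv as [Lc HL].
  set (w := fun n : nat => (2 * INR (S n) + 1) * cw (S n) ^ 2).
  assert (Hw : is_lim_seq w (2 / PI)).
  { apply (is_lim_seq_le_le (fun _ => 2 / PI) w (fun n => 2 / PI * (1 + 1 / (2 * INR (S n) + 1)))).
    - intros n. apply cw_bounds.
    - apply is_lim_seq_const.
    - cut (is_lim_seq (fun n => 2 / PI * (1 + 1 / (2 * INR (S n) + 1))) (2 / PI * (1 + 0))).
      { rewrite Rplus_0_r, Rmult_1_r. auto. }
      apply lim_scal. apply (is_lim_seq_plus' _ _ 1 0). apply is_lim_seq_const.
      apply is_lim_seq_spec. intros eps.
      destruct (nfloor_ex (/ eps)) as [N HN]. apply Rlt_le, Rinv_0_lt_compat, cond_pos.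
      exists N. intros n Hn. rewrite Rminus_0_r.
      pose proof (pos_INR n). rewrite S_INR.
      rewrite Rabs_pos_eq by (apply Rlt_le, Rdiv_lt_0_compat; lra).
      apply le_INR in Hn.
      pose proof (cond_pos eps).
      apply (Rmult_lt_reg_r (2 * (INR n + 1) + 1)); [lra|].
      unfold Rdiv. rewrite Rmult_1_l, Rinv_l by lra.
      apply (Rmult_lt_reg_l (/ eps)). apply Rinv_0_lt_compat; lra.
      rewrite <- Rmult_assoc, Rinv_l by lra. lra. }
  assert (Hlw : is_lim_seq (fun n => ln (w n)) (ln (2 / PI))).
  { apply is_lim_seq_continuous. apply cont_ln. pose proof PI_RGT_0.
    apply Rdiv_lt_0_compat; lra. exact Hw. }
  assert (Hr : is_lim_seq (fun n => ln (2 + 1 / INR (S n)) + ln 2 + 2 * la (2 * S n) - 4 * la (S n))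
                 (ln 2 + ln 2 + 2 * Lc - 4 * Lc)).
  { apply is_lim_seq_minus'. apply is_lim_seq_plus'. apply is_lim_seq_plus'.
    - apply (is_lim_seq_continuous ln (fun n => 2 + 1 / INR (S n)) 2).
      apply cont_ln; lra.
      cut (is_lim_seq (fun n => 2 + 1 / INR (S n)) (2 + 0)).
      { rewrite Rplus_0_r. auto. }
      apply (is_lim_seq_plus' _ _ 2 0). apply is_lim_seq_const.
      apply is_lim_seq_spec. intros eps.
      destruct (nfloor_ex (/ eps)) as [N HN]. apply Rlt_le, Rinv_0_lt_compat, cond_pos.
      exists N. intros n Hn. rewrite Rminus_0_r.
      pose proof (pos_INR n). rewrite S_INR.
      rewrite Rabs_pos_eq by (apply Rlt_le, Rdiv_lt_0_compat; lra).
      apply le_INR in Hn.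
      pose proof (cond_pos eps).
      apply (Rmult_lt_reg_r (INR n + 1)); [lra|].
      unfold Rdiv. rewrite Rmult_1_l, Rinv_l by lra.
      apply (Rmult_lt_reg_l (/ eps)). apply Rinv_0_lt_compat; lra.
      rewrite <- Rmult_assoc, Rinv_l by lra. lra.
    - apply is_lim_seq_const.
    - apply (lim_scal _ 2 Lc).
      apply (is_lim_seq_ext (fun n => us (2 * n + 1)%nat)).
      { intros n. unfold us. f_equal. lia. }
      apply (is_lim_seq_subseq us Lc (fun n => 2 * n + 1)%nat); [|exact HL].
      apply eventually_subseq. intros; lia.
    - apply (lim_scal _ 4 Lc). exact HL. }
  assert (Heq : ln (2 / PI) = ln 2 + ln 2 + 2 * Lc - 4 * Lc).
  { apply is_lim_seq_unique in Hlw. apply is_lim_seq_unique in Hr.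
    assert (Finite (ln (2 / PI)) = Finite (ln 2 + ln 2 + 2 * Lc - 4 * Lc)).
    { rewrite <- Hlw, <- Hr. apply Lim_seq_ext. intros n.
      unfold w. apply ln_wallis_id. lia. }
    injection H. auto. }
  assert (Lc = c0).
  { unfold c0. pose proof PI_RGT_0.
    rewrite ln_div in Heq by lra. rewrite ln_mult by lra. lra. }
  subst. exact HL.
Qed.

Definition Pf (N k : nat) : R := INR (fact N) / (INR (fact (N - k)) * INR N ^ k).

Lemma Pf_bounds (N k : nat) : (1 <= N)%nat -> (k <= N)%nat ->
  1 - INR k ^ 2 / INR N <= Pf N k <= 1.
Proof.
  intros HN. induction k; intros Hk.
  - unfold Pf. rewrite Nat.sub_0_r. simpl.
    assert (0 < INR (fact N)) by apply lt_0_INR, lt_O_fact.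
    split.
    + unfold Rdiv. rewrite Rmult_0_l, Rmult_0_l, Rmult_1_r, Rinv_r by lra. lra.
    + rewrite Rmult_1_r. unfold Rdiv. rewrite Rinv_r by lra. lra.
  - assert (HNp : 0 < INR N) by (apply lt_0_INR; lia).
    assert (Hrec : Pf N (S k) = Pf N k * (INR N - INR k) / INR N).
    { unfold Pf.
      replace (N - k)%nat with (S (N - S k)) by lia.
      replace (fact (S (N - S k))) with (S (N - S k) * fact (N - S k))%nat by reflexivity.
      rewrite mult_INR, S_INR, minus_INR by lia. rewrite S_INR.
      assert (0 < INR (fact (N - S k))) by apply lt_0_INR, lt_O_fact.
      assert (INR (S k) <= INR N) by (apply le_INR; lia). rewrite S_INR in *.
      simpl pow. field. repeat split; try lra. apply pow_nonzero. lra. }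
    specialize (IHk ltac:(lia)).
    assert (Hkl : INR (S k) <= INR N) by (apply le_INR; lia).
    rewrite S_INR in Hkl.
    rewrite Hrec, S_INR.
    assert (0 <= (INR N - INR k) / INR N <= 1).
    { split. apply Rmult_le_pos. lra. apply Rlt_le, Rinv_0_lt_compat; lra.
      apply (Rmult_le_reg_r (INR N)); [lra|]. unfold Rdiv. rewrite Rmult_assoc, Rinv_l by lra.
      pose proof (pos_INR k). lra. }
    assert (HPk0 : 0 <= Pf N k).
    { unfold Pf. apply Rmult_le_pos. apply pos_INR. apply Rlt_le, Rinv_0_lt_compat.
      apply Rmult_lt_0_compat. apply lt_0_INR, lt_O_fact. apply pow_lt; lra. }
    replace (Pf N k * (INR N - INR k) / INR N) with (Pf N k * ((INR N - INR k) / INR N)) by (field; lra).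
    split.
    + replace ((INR N - INR k) / INR N) with (1 - INR k / INR N) by (field; lra).
      assert (Pf N k * (INR k / INR N) <= INR k / INR N).
      { rewrite <- (Rmult_1_l (INR k / INR N)) at 2. apply Rmult_le_compat_r.
        apply Rmult_le_pos. apply pos_INR. apply Rlt_le, Rinv_0_lt_compat; lra. lra. }
      assert ((INR k + 1) ^ 2 / INR N = INR k ^ 2 / INR N + INR k / INR N + (INR k + 1) / INR N) by (field; lra).
      assert (0 <= (INR k + 1) / INR N) by (apply Rmult_le_pos; [pose proof (pos_INR k); lra| apply Rlt_le, Rinv_0_lt_compat; lra]).
      nra.
    + nra.
Qed.

Lemma half_eq (k : nat) : (Nat.div (k * (k - 1)) 2 * 2 = k * (k - 1))%nat.
Proof.
  destruct (Nat.Even_or_Odd k) as [[j Hj]|[j Hj]]; subst k.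
  - replace (2 * j * (2 * j - 1))%nat with (j * (2 * j - 1) * 2)%nat by ring.
    rewrite Nat.div_mul by lia. reflexivity.
  - replace (2 * j + 1 - 1)%nat with (2 * j)%nat by lia.
    replace ((2 * j + 1) * (2 * j))%nat with ((2 * j + 1) * j * 2)%nat by ring.
    rewrite Nat.div_mul by lia. reflexivity.
Qed.

Lemma INR_half (k : nat) : INR (Nat.div (k * (k - 1)) 2) = INR k * (INR k - 1) / 2.
Proof.
  destruct k as [|k].
  - simpl. field.
  - pose proof (half_eq (S k)) as H.
    apply (f_equal INR) in H. rewrite !mult_INR in H.
    rewrite minus_INR in H by lia. replace (INR 2) with 2 in H by (simpl; ring).
    replace (INR 1) with 1 in H by reflexivity. lra.
Qed.

Lemma EX_ratio (N : nat) (p : R) (k : nat) :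
  (2 <= k)%nat -> (k <= N)%nat -> 0 < p < 1 ->
  EX N p k / exp (gamma N p (INR k)) = Pf N k * exp (c0 - la k).
Proof.
  intros Hk HkN Hp.
  assert (HkR : 2 <= INR k) by (replace 2 with (INR 2) by (simpl; ring); apply le_INR; lia).
  assert (HNR : INR k <= INR N) by (apply le_INR; lia).
  set (m := Nat.div (k * (k - 1)) 2).
  assert (Hm : INR m = INR k * (INR k - 1) / 2) by apply INR_half.
  assert (Hmk : (k <= m + 1)%nat).
  { apply INR_le. rewrite plus_INR, Hm. simpl INR. nra. }
  assert (HF : forall j, 0 < INR (fact j)) by (intros; apply lt_0_INR, lt_O_fact).
  assert (HEX : EX N p k = exp (ln (INR (fact N)) - ln (INR (fact k)) - ln (INR (fact (N - k)))
       + (INR k - 2) * ln (INR k) + (INR k - 1) * ln p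
       + (INR k * (INR k - 1) / 2 + 1 - INR k) * ln (1 - p))).
  { unfold EX, binom. rewrite (proj2 (Nat.leb_le k N) HkN).
    rewrite !exp_plus. unfold Rminus. rewrite !exp_plus.
    rewrite !exp_Ropp. rewrite !exp_ln by (auto; try lra).
    replace (INR k + - (2)) with (INR (k - 2)) by (rewrite minus_INR by lia; simpl; ring).
    replace (INR k * (INR k + - (1)) / 2 + 1 + - INR k) with (INR (m + 1 - k))
      by (rewrite minus_INR by lia; rewrite plus_INR, Hm; simpl; field).
    replace (INR k + - (1)) with (INR (k - 1)) by (rewrite minus_INR by lia; simpl; ring).
    rewrite <- !ln_pow by lra. rewrite !exp_ln by (apply pow_lt; lra).
    fold m. field. split; apply Rgt_not_eq; apply HF. }
  assert (HPf : Pf N k = exp (ln (INR (fact N)) - ln (INR (fact (N - k))) - INR k * ln (INR N))).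
  { unfold Pf. unfold Rminus. rewrite !exp_plus, !exp_Ropp, !exp_ln by auto.
    rewrite <- ln_pow by lra. rewrite exp_ln by (apply pow_lt; lra). field.
    split. apply pow_nonzero; lra. apply Rgt_not_eq, HF. }
  rewrite HEX, HPf. rewrite <- exp_plus. unfold Rdiv. rewrite <- exp_Ropp, <- exp_plus.
  f_equal. unfold gamma, c0, la.
  rewrite ln_div by lra. replace (1 / (1 - p)) with (/ (1 - p)) by (field; lra).
  rewrite ln_Rinv by lra. field.
Qed.

Lemma ev_and (P Q : nat -> Prop) : eventually P -> eventually Q -> eventually (fun n => P n /\ Q n).
Proof.
  intros [N1 H1] [N2 H2]. exists (max N1 N2). intros n Hn. split.
  apply H1; lia. apply H2; lia.
Qed.

Lemma lim_pinf_ev (u : nat -> R) (M : R) : is_lim_seq u p_infty -> eventually (fun n => M < u n).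
Proof. intros H. apply is_lim_seq_spec in H. apply H. Qed.

Lemma lim_0_ev (u : nat -> R) (eps : R) : 0 < eps -> is_lim_seq u 0 -> eventually (fun n => Rabs (u n) < eps).
Proof.
  intros He H. apply is_lim_seq_spec in H. destruct (H (mkposreal eps He)) as [N HN].
  exists N. intros n Hn. specialize (HN n Hn). rewrite Rminus_0_r in HN. exact HN.
Qed.

Lemma EX_lim (p : nat -> R) (Hpev : eventually (fun n => 0 < p n < 1))
  (k : nat -> nat)
  (Hk1 : is_lim_seq (fun n => INR (k n)) p_infty)
  (Hk2 : is_lim_seq (fun n => INR (k n) / sqrt (INR n)) 0) :
  is_lim_seq (fun n => EX n (p n) (k n) / exp (gamma n (p n) (INR (k n)))) 1.
Proof.
  pose proof (lim_pinf_ev _ 2 Hk1) as Hk2ev.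
  pose proof (lim_0_ev _ 1 Rlt_0_1 Hk2) as Hsq.
  assert (Hn1 : eventually (fun n : nat => (1 <= n)%nat)) by (exists 1%nat; auto).
  assert (Hkn : eventually (fun n => (2 <= k n)%nat /\ (k n <= n)%nat /\ 0 < p n < 1)).
  { destruct (ev_and _ _ (ev_and _ _ Hk2ev Hsq) (ev_and _ _ Hn1 Hpev)) as [N HN].
    exists N. intros n Hn. destruct (HN n Hn) as [[Ha Hb] [Hc Hd]].
    assert (Hnp : 0 < INR n) by (apply lt_0_INR; lia).
    assert (Hs : 0 < sqrt (INR n)) by (apply sqrt_lt_R0; lra).
    split; [|split; [|exact Hd]].
    - apply INR_le. simpl INR. lra.
    - rewrite Rabs_pos_eq in Hb by (apply Rmult_le_pos; [apply pos_INR | apply Rlt_le, Rinv_0_lt_compat; lra]).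
      assert (INR (k n) < sqrt (INR n)).
      { apply (Rmult_lt_reg_r (/ sqrt (INR n))). apply Rinv_0_lt_compat; lra.
        rewrite Rinv_r by lra. exact Hb. }
      assert (sqrt (INR n) <= INR n).
      { rewrite <- (sqrt_square (INR n)) at 2 by lra. apply sqrt_le_1_alt.
        assert (1 <= INR n) by (apply (le_INR 1); lia). nra. }
      apply INR_le. lra. }
  apply (is_lim_seq_ext_loc (fun n => Pf n (k n) * exp (c0 - la (k n)))).
  { destruct Hkn as [N HN]. exists N. intros n Hn. destruct (HN n Hn) as [Ha [Hb Hc]].
    symmetry. apply EX_ratio; auto. }
  replace 1 with (1 * exp (c0 - c0)) by (rewrite Rminus_diag, exp_0; ring).
  apply is_lim_seq_mult'.
  -
    apply (is_lim_seq_le_le_loc (fun n => 1 - (INR (k n) / sqrt (INR n)) * (INR (k n) / sqrt (INR n))) _ (fun _ => 1)).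
    + destruct Hkn as [N HN]. exists N. intros n Hn. destruct (HN n Hn) as [Ha [Hb Hc]].
      assert (Hnp : 0 < INR n) by (apply lt_0_INR; lia).
      replace (INR (k n) / sqrt (INR n) * (INR (k n) / sqrt (INR n))) with (INR (k n) ^ 2 / INR n).
      * apply Pf_bounds; lia.
      * unfold Rdiv. rewrite Rmult_comm. rewrite <- (sqrt_sqrt (INR n)) at 1 by lra.
        field. apply Rgt_not_eq, sqrt_lt_R0; lra.
    + cut (is_lim_seq (fun n => 1 - (INR (k n) / sqrt (INR n)) * (INR (k n) / sqrt (INR n))) (1 - 0 * 0)).
      { rewrite Rmult_0_l, Rminus_0_r. auto. }
      apply is_lim_seq_minus'. apply is_lim_seq_const. apply is_lim_seq_mult'; exact Hk2.
    + apply is_lim_seq_const.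
  - apply (is_lim_seq_continuous exp (fun n => c0 - la (k n))). apply cont_exp.
    apply is_lim_seq_minus'. apply is_lim_seq_const.
    apply (is_lim_seq_ext_loc (fun n => us (k n - 1)%nat)).
    { destruct Hk2ev as [N HN]. exists N. intros n Hn. specialize (HN n Hn).
      unfold us. f_equal. assert (1 <= k n)%nat by (apply INR_le; simpl INR; lra). lia. }
    apply (is_lim_seq_subseq us c0 (fun n => k n - 1)%nat); [|apply us_lim].
    intros P [N HN]. unfold filtermap.
    destruct (lim_pinf_ev _ (INR N + 1) Hk1) as [M HM]. exists M. intros n Hn.
    apply HN. specialize (HM n Hn). rewrite <- S_INR in HM. apply INR_lt in HM. lia.
Qed.

Lemma ln_le_sub1 y : 0 < y -> ln y <= y - 1.
Proof. intros Hy. pose proof (exp_ineq1_le (ln y)). rewrite exp_ln in H by lra. lra. Qed.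

Lemma exp1_ge2 : 2 <= exp 1.
Proof. pose proof (exp_ineq1_le 1). lra. Qed.

Lemma c0_bounds : 0 <= c0 <= 3/2.
Proof.
  unfold c0. pose proof PI_4. pose proof PI_RGT_0. pose proof (PI2_1). split.
  - assert (0 <= ln (2 * PI)). { rewrite <- ln_1. apply ln_le; lra. } lra.
  - assert (ln (2 * PI) <= ln (exp 3)).
    { apply ln_le. lra.
      replace 3 with (1 + 1 + 1) by ring. rewrite !exp_plus.
      pose proof exp1_ge2. nra. }
    rewrite ln_exp in H2. lra.
Qed.

Lemma L_bounds p : 0 < p <= 1/2 -> p <= ln (1 / (1 - p)) <= 2 * p.
Proof.
  intros Hp. replace (1 / (1 - p)) with (/ (1 - p)) by (field; lra).
  rewrite ln_Rinv by lra. split.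
  - pose proof (ln_le_sub1 (1 - p) ltac:(lra)). lra.
  - pose proof (ln_le_sub1 (/ (1 - p)) ltac:(apply Rinv_0_lt_compat; lra)).
    rewrite ln_Rinv in H by lra.
    assert (/ (1 - p) <= 1 + 2 * p).
    { apply (Rmult_le_reg_r (1 - p)). lra. rewrite Rinv_l by lra. nra. }
    lra.
Qed.

Lemma gamma_form (n : nat) (p k : R) : 0 < p < 1 ->
  gamma n p k = - c0 + k * (ln (INR n) + 1 + ln p + ln (1 / (1 - p)))
                - ln p - ln (1 / (1 - p)) - 5/2 * ln k
                - k * (k - 1) / 2 * ln (1 / (1 - p)).
Proof.
  intros Hp. unfold gamma, c0.
  replace (p / (1 - p)) with (p * (1 / (1 - p))) by (field; lra).
  rewrite (ln_mult p (1 / (1 - p))) by (try lra; apply Rdiv_lt_0_compat; lra). ring.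
Qed.

Definition gam (c A q L k : R) : R := - c + q + k * A - 5/2 * ln k - k * (k - 1) / 2 * L.

Lemma gam_pos (c A q L k : R) : 0 <= c <= 3/2 -> 10 <= A -> 0 <= q -> 0 < L ->
  1 <= k <= A / L + 1/2 -> 0 < gam c A q L k.
Proof.
  intros Hc HA Hq HL Hk. unfold gam.
  pose proof (ln_le_sub1 k ltac:(lra)).
  assert (HkL : (k - 1) * L <= A).
  { assert (k * L <= A + L / 2).
    { destruct Hk as [_ Hk2]. apply (Rmult_le_compat_r L) in Hk2; [|lra].
      replace ((A / L + 1/2) * L) with (A + L/2) in Hk2 by (field; lra). lra. }
    lra. }
  assert (k * (k - 1) / 2 * L <= k * A / 2).
  { replace (k * (k - 1) / 2 * L) with (k * ((k - 1) * L) / 2) by field. nra. }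
  nra.
Qed.

Lemma gam_decr (c A q L k1 k2 : R) : 0 < L -> A / L + 1/2 <= k1 -> k1 < k2 ->
  0 < k1 -> gam c A q L k2 < gam c A q L k1.
Proof.
  intros HL Hk1 H12 Hk1p. unfold gam.
  pose proof (ln_increasing k1 k2 Hk1p H12).
  assert (A + L / 2 <= k1 * L).
  { apply (Rmult_le_compat_r L) in Hk1; [|lra].
    replace ((A / L + 1/2) * L) with (A + L/2) in Hk1 by (field; lra). lra. }
  assert (Hn : A - L * (k1 + k2 - 1) / 2 < 0) by nra.
  assert (k2 * A - k2 * (k2 - 1) / 2 * L - (k1 * A - k1 * (k1 - 1) / 2 * L) =
          (k2 - k1) * (A - L * (k1 + k2 - 1) / 2)) by field.
  assert ((k2 - k1) * (A - L * (k1 + k2 - 1) / 2) < 0) by nra.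
  lra.
Qed.

Lemma gam_uniq (c A q L k1 k2 : R) : 0 <= c <= 3/2 -> 10 <= A -> 0 <= q -> 0 < L ->
  1 <= k1 -> 1 <= k2 -> gam c A q L k1 = 0 -> gam c A q L k2 = 0 -> k1 = k2.
Proof.
  intros Hc HA Hq HL H1 H2 E1 E2.
  assert (G1 : A / L + 1/2 < k1).
  { destruct (Rle_lt_dec k1 (A / L + 1/2)); auto.
    pose proof (gam_pos c A q L k1 Hc HA Hq HL ltac:(lra)). lra. }
  assert (G2 : A / L + 1/2 < k2).
  { destruct (Rle_lt_dec k2 (A / L + 1/2)); auto.
    pose proof (gam_pos c A q L k2 Hc HA Hq HL ltac:(lra)). lra. }
  destruct (Rtotal_order k1 k2) as [H|[H|H]]; auto.
  - pose proof (gam_decr c A q L k1 k2 HL ltac:(lra) H ltac:(lra)). lra.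
  - pose proof (gam_decr c A q L k2 k1 HL ltac:(lra) H ltac:(lra)). lra.
Qed.

Lemma gamma_gam (n : nat) (p k : R) : 0 < p < 1 ->
  gamma n p k = gam c0 (ln (INR n) + 1 + ln p + ln (1 / (1 - p)))
                  (- ln p - ln (1 / (1 - p))) (ln (1 / (1 - p))) k.
Proof. intros Hp. rewrite gamma_form by exact Hp. unfold gam. ring. Qed.

Lemma sign_core (c B L lp lL δ t : R) :
  0 <= c <= 3/2 -> 0 < L <= 1 -> lL = ln L -> 0 <= lL - lp <= 1 ->
  0 < B - 1 -> 0 <= - lp <= (B - 1) / 6 -> 0 < δ <= 1 -> 1000 / δ^2 <= 2 * (B - 1) ->
  -1 <= t <= 1 ->
  let k := 2 * B / L + 3 * lp / (2 * (B - 1)) + 3 + t in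
  1 <= k /\ exists E, Rabs E < δ /\ gam c (B + L) (- lp - L) L k = (k * L / 2) * (- t - E).
Proof.
  intros Hc HL HlL Hlr HB Hlp Hd HBd Ht k.
  set (s := 3 * lp / (2 * (B - 1))).
  assert (Hs : -1/4 <= s <= 0).
  { assert (s * (2 * (B - 1)) = 3 * lp) by (unfold s; field; lra). nra. }
  assert (HBL : 2 * B / L >= 2 * B).
  { assert (2 * B / L * L = 2 * B) by (field; lra). nra. }
  assert (Hk1 : 1 <= k) by (unfold k; fold s; lra).
  split; [exact Hk1|].
  set (D := k * L).
  assert (HD2 : D - 2 * (B - 1) = (s + 3 + t) * L + 2).
  { unfold D, k. fold s. field. lra. }
  assert (HDp : 2 * (B - 1) <= D) by nra.
  assert (Hδ2 : 0 < δ ^ 2) by (apply pow_lt; lra).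
  assert (H1000 : 1000 <= 1000 / δ ^ 2).
  { assert (1000 / δ ^ 2 * δ ^ 2 = 1000) by (field; lra).
    assert (δ ^ 2 <= 1) by (simpl; nra). nra. }
  assert (HD1 : 1000 <= D) by lra.
  assert (HlnD : ln D = ln k + lL) by (unfold D; rewrite HlL; apply ln_mult; lra).
  set (E := s + (5 * ln k + 2 * c + 2 * lp + 2 * L) / D).
  exists E. split.
  2:{ assert (Hk : k * L = 2 * B + (s + 3 + t) * L) by (unfold k; fold s; field; lra).
      assert (HZ : k * (B + L) - k * (k - 1) / 2 * L = - (D / 2) * (t + s)).
      { assert (k * (B + L) - k * (k - 1) / 2 * L + (D / 2) * (t + s) =
                k * (2 * B + (s + 3 + t) * L - k * L) / 2) by (unfold D; field).
        rewrite <- Hk in H. replace (k * (k * L - k * L) / 2) with 0 in H by field. lra. }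
      unfold gam, E. fold D.
      replace (- c + (- lp - L) + k * (B + L) - 5 / 2 * ln k - k * (k - 1) / 2 * L)
        with (- c + (- lp - L) - 5 / 2 * ln k + (k * (B + L) - k * (k - 1) / 2 * L)) by ring.
      rewrite HZ. field. lra. }
  assert (HDE : D * E = s * (D - 2 * (B - 1)) + 5 * ln D - 5 * (lL - lp) + 2 * c + 2 * L).
  { unfold E. rewrite HlnD. unfold s. field. split; lra. }
  set (r := sqrt D).
  assert (Hr2 : r * r = D) by (apply sqrt_sqrt; lra).
  assert (Hr0 : 0 < r) by (apply sqrt_lt_R0; lra).
  assert (HlnD2 : ln D <= 2 * r).
  { rewrite <- Hr2. rewrite ln_mult by lra. pose proof (ln_le_sub1 r Hr0). lra. }
  assert (HlnD0 : 0 <= ln D) by (rewrite <- ln_1; apply ln_le; lra).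
  assert (Hsd : Rabs (s * (D - 2 * (B - 1))) <= 2).
  { rewrite HD2. rewrite Rabs_mult. rewrite (Rabs_left1 s) by lra.
    rewrite Rabs_pos_eq by nra. nra. }
  assert (HDEb : Rabs (D * E) <= 10 * r + 12).
  { rewrite HDE. apply Rabs_le. apply Rabs_le_between in Hsd. nra. }
  rewrite Rabs_mult, (Rabs_pos_eq D) in HDEb by lra.
  assert (Hr1 : 1 <= r) by nra.
  assert (HrD : 22 < r * δ).
  { assert (1000 <= (r * δ) ^ 2).
    { replace ((r * δ) ^ 2) with (D * δ ^ 2) by (rewrite <- Hr2; ring).
      assert (1000 / δ ^ 2 * δ ^ 2 = 1000) by (field; lra). nra. }
    assert (0 < r * δ) by (apply Rmult_lt_0_compat; lra).
    destruct (Rlt_le_dec 22 (r * δ)); auto.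
    assert ((r * δ) ^ 2 <= 22 * 22) by (simpl; nra). lra. }
  assert (Rabs E * (r * r) <= 10 * r + 12) by (rewrite Hr2; lra).
  assert (0 <= Rabs E) by apply Rabs_pos.
  assert (Rabs E * r <= 22) by nra.
  assert (Rabs E * r < δ * r) by nra.
  nra.
Qed.

Definition Good (n : nat) (p δ : R) : Prop :=
  0 < p <= 1/2 /\ 0 < INR n /\ - (1/7) * ln (INR n) <= ln p /\ 700 / δ^2 + 12 <= ln (INR n).

Lemma approx_form (n : nat) (p : R) : 0 < p < 1 -> 0 < INR n ->
  khat_approx n p = 2 * (ln (INR n) + 1 + ln p) / ln (1 / (1 - p))
                    + 3 * ln p / (2 * (ln (INR n) + 1 + ln p - 1)) + 3.
Proof.
  intros Hp Hn. unfold khat_approx, logb.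
  rewrite (ln_mult (exp 1 * INR n) p) by (try lra; apply Rmult_lt_0_compat; try lra; apply exp_pos).
  rewrite ln_mult by (try lra; apply exp_pos). rewrite ln_exp.
  rewrite (ln_mult (INR n) p) by lra.
  replace (1 + ln (INR n) + ln p) with (ln (INR n) + 1 + ln p) by ring.
  replace (ln (INR n) + 1 + ln p - 1) with (ln (INR n) + ln p) by ring.
  unfold Rdiv. ring.
Qed.

Lemma cont_gamma (n : nat) (p a : R) : 0 < a -> continuity_pt (fun k => - gamma n p k) a.
Proof.
  intros Ha. apply continuity_pt_filterlim.
  apply (ex_derive_continuous (V:=R_NormedModule) (fun k => - gamma n p k)). unfold gamma. auto_derive. lra.
Qed.

Lemma good_facts (n : nat) (p δ : R) : 0 < δ <= 1 -> Good n p δ ->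
  let B := ln (INR n) + 1 + ln p in
  let L := ln (1 / (1 - p)) in
  0 < L <= 1 /\ 0 <= ln L - ln p <= 1 /\ 0 < B - 1 /\ 0 <= - ln p <= (B - 1) / 6 /\
  1000 / δ ^ 2 <= 2 * (B - 1) /\ 10 <= B + L /\ 0 <= - ln p - L /\ p <= L.
Proof.
  intros Hd [Hp [Hn [Hlp Hbig]]] B L.
  pose proof (L_bounds p Hp) as HL. fold L in HL.
  assert (Hd2 : 0 < δ ^ 2) by (apply pow_lt; lra).
  assert (H700 : 0 <= 700 / δ ^ 2) by (apply Rlt_le, Rdiv_lt_0_compat; lra).
  assert (Hlp0 : ln p <= 0) by (rewrite <- ln_1; apply ln_le; lra).
  assert (HlL : 0 <= ln L - ln p <= 1).
  { rewrite <- ln_div by lra. split.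
    - rewrite <- ln_1. apply ln_le. lra. apply (Rmult_le_reg_r p); [lra|].
      unfold Rdiv. rewrite Rmult_assoc, Rinv_l by lra. lra.
    - assert (ln (L / p) <= ln 2).
      { apply ln_le. apply Rdiv_lt_0_compat; lra.
        apply (Rmult_le_reg_r p); [lra|]. unfold Rdiv. rewrite Rmult_assoc, Rinv_l by lra. lra. }
      pose proof (ln_le_sub1 2 ltac:(lra)). lra. }
  assert (Hq : 0 <= - ln p - L).
  { unfold L. replace (1 / (1 - p)) with (/ (1 - p)) by (field; lra).
    rewrite ln_Rinv by lra. replace (- ln p - - ln (1 - p)) with (ln (1 - p) - ln p) by ring. rewrite <- ln_div by lra.
    rewrite <- ln_1. apply ln_le; [lra|].
    apply (Rmult_le_reg_r p); [lra|]. unfold Rdiv. rewrite Rmult_assoc, Rinv_l by lra. lra. }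
  assert (H1000 : 1000 / δ ^ 2 = 2 * (500 / δ ^ 2)) by (field; lra).
  assert (H500 : 500 / δ ^ 2 <= 700 / δ ^ 2).
  { unfold Rdiv. apply Rmult_le_compat_r. apply Rlt_le, Rinv_0_lt_compat; lra. lra. }
  unfold B. repeat split; lra.
Qed.

Lemma good_root (n : nat) (p δ : R) : 0 < δ <= 1 -> Good n p δ ->
  exists z, Rabs (z - khat_approx n p) <= δ /\ 1 <= z /\ gamma n p z = 0.
Proof.
  intros Hd HG.
  pose proof (good_facts n p δ Hd HG) as F. simpl in F.
  destruct HG as [Hp [Hn [Hlp Hbig]]].
  set (B := ln (INR n) + 1 + ln p) in *.
  set (L := ln (1 / (1 - p))) in *.
  destruct F as [HL [HlL [HB [Hlp6 [Hbd [HA [Hq HpL]]]]]]].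
  rewrite approx_form by (auto; lra). fold B L.
  replace (ln (INR n) + 1 + ln p - 1) with (B - 1) by (unfold B; ring).
  set (ap := 2 * B / L + 3 * ln p / (2 * (B - 1)) + 3).
  destruct (sign_core c0 B L (ln p) (ln L) δ (- δ) c0_bounds HL eq_refl HlL HB Hlp6 Hd Hbd ltac:(lra))
    as [Hk1 [E1 [HE1 Hg1]]].
  destruct (sign_core c0 B L (ln p) (ln L) δ δ c0_bounds HL eq_refl HlL HB Hlp6 Hd Hbd ltac:(lra))
    as [Hk2 [E2 [HE2 Hg2]]].
  fold ap in Hk1, Hg1, Hk2, Hg2.
  replace (ap + - δ) with (ap - δ) in * by ring.
  assert (Hgam : forall k, gamma n p k = gam c0 (B + L) (- ln p - L) L k).
  { intros k. rewrite gamma_gam by lra. reflexivity. }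
  assert (G1 : gamma n p (ap - δ) > 0).
  { rewrite Hgam, Hg1. apply Rabs_def2 in HE1.
    assert (0 < (ap - δ) * L / 2) by (apply Rmult_lt_0_compat; [apply Rmult_lt_0_compat|]; lra).
    apply Rmult_lt_0_compat; lra. }
  assert (G2 : gamma n p (ap + δ) < 0).
  { rewrite Hgam, Hg2. apply Rabs_def2 in HE2.
    assert (0 < (ap + δ) * L / 2) by (apply Rmult_lt_0_compat; [apply Rmult_lt_0_compat|]; lra).
    nra. }
  destruct (IVT_interv (fun k => - gamma n p k) (ap - δ) (ap + δ)) as [z [Hz Hz0]].
  - intros a Ha. apply cont_gamma. lra.
  - lra.
  - lra.
  - lra.
  - exists z. split; [|split].
    + apply Rabs_le. lra.
    + lra.
    + lra.
Qed.

Lemma good_uniq (n : nat) (p δ z1 z2 : R) : 0 < δ <= 1 -> Good n p δ ->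
  1 <= z1 -> 1 <= z2 -> gamma n p z1 = 0 -> gamma n p z2 = 0 -> z1 = z2.
Proof.
  intros Hd HG H1 H2 E1 E2.
  pose proof (good_facts n p δ Hd HG) as F. simpl in F.
  destruct HG as [Hp _].
  destruct F as [HL [_ [_ [_ [_ [HA [Hq _]]]]]]].
  rewrite gamma_gam in E1, E2 by lra.
  eapply gam_uniq; [exact c0_bounds | exact HA | exact Hq | exact (proj1 HL) | exact H1 | exact H2 | exact E1 | exact E2].
Qed.

Definition khat_of (p : nat -> R) (n : nat) : R :=
  epsilon (inhabits 0) (fun k => 1 <= k /\ gamma n (p n) k = 0).

Lemma good_khat (p : nat -> R) (n : nat) (δ : R) : 0 < δ <= 1 -> Good n (p n) δ ->
  Rabs (khat_of p n - khat_approx n (p n)) <= δ /\ 1 <= khat_of p n /\ gamma n (p n) (khat_of p n) = 0.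
Proof.
  intros Hd HG.
  destruct (good_root n (p n) δ Hd HG) as [z [Hz1 [Hz2 Hz3]]].
  assert (HK : 1 <= khat_of p n /\ gamma n (p n) (khat_of p n) = 0).
  { unfold khat_of. apply (epsilon_spec (inhabits 0) (fun k => 1 <= k /\ gamma n (p n) k = 0)).
    exists z. auto. }
  destruct HK as [HK1 HK2].
  assert (khat_of p n = z) by (apply (good_uniq n (p n) δ); auto).
  rewrite H. auto.
Qed.

Lemma ev_ln_big (M : R) : eventually (fun n => 0 < INR n /\ M <= ln (INR n)).
Proof.
  destruct (lim_pinf_ev INR (exp M) is_lim_seq_INR) as [N HN].
  exists N. intros n Hn. specialize (HN n Hn).
  pose proof (exp_pos M). split. lra.
  rewrite <- (ln_exp M) at 1. apply ln_le; lra.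
Qed.

Lemma expo_bound (eps : R) : 0 < eps -> - (1/7) <= - (exp 1 - 2) / (3 * exp 1 - 2) + eps.
Proof.
  intros He. pose proof exp1_ge2. pose proof exp_le_3.
  assert ((exp 1 - 2) / (3 * exp 1 - 2) <= 1/7).
  { apply (Rmult_le_reg_r (3 * exp 1 - 2)); [lra|].
    unfold Rdiv at 1. rewrite Rmult_assoc, Rinv_l by lra. lra. }
  unfold Rdiv in *. lra.
Qed.

Lemma ev_good (p : nat -> R)
  (Hlow : exists eps : R, 0 < eps /\ exists N : nat, forall n : nat, (N <= n)%nat ->
            Rpower (INR n) (- (exp 1 - 2) / (3 * exp 1 - 2) + eps) <= p n)
  (Hp0 : is_lim_seq p 0) (M : R) :
  eventually (fun n => 0 < p n <= 1/2 /\ 0 < INR n /\ - (1/7) * ln (INR n) <= ln (p n) /\ M <= ln (INR n)).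
Proof.
  destruct Hlow as [eps [Heps [N HN]]].
  destruct (lim_0_ev p (1/2) ltac:(lra) Hp0) as [N2 HN2].
  destruct (ev_ln_big (Rmax M 0)) as [N3 HN3].
  exists (max N (max N2 N3)). intros n Hn.
  specialize (HN n ltac:(lia)). specialize (HN2 n ltac:(lia)). specialize (HN3 n ltac:(lia)).
  destruct HN3 as [Hn0 HlnM].
  assert (Hn1 : 1 <= INR n).
  { rewrite <- (exp_ln (INR n)) by lra. pose proof (exp_ineq1_le (ln (INR n))).
    pose proof (Rmax_r M 0). lra. }
  assert (Hr : Rpower (INR n) (- (1/7)) <= p n).
  { eapply Rle_trans; [|exact HN]. apply Rle_Rpower; auto. apply expo_bound; auto. }
  assert (Hr0 : 0 < Rpower (INR n) (- (1/7))) by (unfold Rpower; apply exp_pos).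
  split; [|split; [lra|split]].
  - apply Rabs_def2 in HN2. lra.
  - replace (- (1/7) * ln (INR n)) with (ln (Rpower (INR n) (- (1/7)))).
    + apply ln_le; lra.
    + unfold Rpower. rewrite ln_exp. ring.
  - pose proof (Rmax_l M 0). lra.
Qed.

Lemma ev_good_d (p : nat -> R)
  (Hlow : exists eps : R, 0 < eps /\ exists N : nat, forall n : nat, (N <= n)%nat ->
            Rpower (INR n) (- (exp 1 - 2) / (3 * exp 1 - 2) + eps) <= p n)
  (Hp0 : is_lim_seq p 0) (δ M : R) :
  eventually (fun n => Good n (p n) δ /\ M <= ln (INR n)).
Proof.
  destruct (ev_good p Hlow Hp0 (Rmax M (700 / δ ^ 2 + 12))) as [N HN].
  exists N. intros n Hn. destruct (HN n Hn) as [A [B [C D]]].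
  pose proof (Rmax_l M (700 / δ ^ 2 + 12)). pose proof (Rmax_r M (700 / δ ^ 2 + 12)).
  split. repeat split; try lra. lra.
Qed.

Lemma approx_bounds (n : nat) (p δ : R) : 0 < δ <= 1 -> Good n p δ ->
  2 * (ln (INR n) + 1 + ln p) + 2 <= khat_approx n p <= 2 * (ln (INR n) + 1) / p + 3.
Proof.
  intros Hd HG.
  pose proof (good_facts n p δ Hd HG) as F. simpl in F.
  destruct HG as [Hp [Hn [Hlp Hbig]]].
  rewrite approx_form by (auto; lra).
  set (B := ln (INR n) + 1 + ln p) in *.
  set (L := ln (1 / (1 - p))) in *.
  destruct F as [HL [HlL [HB [Hlp6 [Hbd [HA [Hq HpL]]]]]]].
  replace (B - 1) with (ln (INR n) + ln p) in Hlp6, HB |- * by (unfold B; ring).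
  set (s := 3 * ln p / (2 * (ln (INR n) + ln p))).
  assert (Hs : -1/4 <= s <= 0).
  { assert (s * (2 * (ln (INR n) + ln p)) = 3 * ln p) by (unfold s; field; lra). nra. }
  assert (H1 : 2 * B / L * L = 2 * B) by (field; lra).
  assert (H2 : 2 * B / L * p <= 2 * (ln (INR n) + 1)).
  { assert (2 * B / L * p <= 2 * B / L * L).
    { apply Rmult_le_compat_l; [|lra]. apply Rlt_le, Rdiv_lt_0_compat; lra. }
    unfold B in *. lra. }
  assert (H3 : 2 * (ln (INR n) + 1) / p * p = 2 * (ln (INR n) + 1)) by (field; lra).
  assert (2 * B / L <= 2 * (ln (INR n) + 1) / p) by nra.
  assert (2 * B <= 2 * B / L) by nra.
  split; lra.
Qed.

Lemma sqrt_bound (x p k : R) : 0 <= x -> 0 < p -> / p <= exp (x / 7) ->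
  0 <= k <= 2 * (x + 1) / p + 4 ->
  k / sqrt (exp x) <= 32 / (1 + 2 * x / 7).
Proof.
  intros Hx Hp Hip Hk.
  assert (Hs : sqrt (exp x) = exp (x / 2)).
  { replace (exp x) with (exp (x / 2) * exp (x / 2)) by (rewrite <- exp_plus; f_equal; field).
    apply sqrt_square. apply Rlt_le, exp_pos. }
  rewrite Hs.
  assert (E1 : x + 1 <= 14 * exp (x / 14)) by (pose proof (exp_ineq1_le (x / 14)); lra).
  assert (E2 : 1 + 2 * x / 7 <= exp (2 * x / 7)) by apply exp_ineq1_le.
  assert (E3 : 1 <= exp (3 * x / 14)) by (pose proof (exp_ineq1_le (3 * x / 14)); lra).
  assert (Hk2 : k <= 32 * exp (3 * x / 14)).
  { assert (2 * (x + 1) / p = 2 * (x + 1) * / p) by (unfold Rdiv; ring).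
    assert (2 * (x + 1) * / p <= 2 * (14 * exp (x / 14)) * exp (x / 7)).
    { apply Rmult_le_compat; try lra. apply Rlt_le, Rinv_0_lt_compat; lra. }
    assert (exp (x / 14) * exp (x / 7) = exp (3 * x / 14)) by (rewrite <- exp_plus; f_equal; field).
    nra. }
  assert (exp (3 * x / 14) = exp (x / 2) * / exp (2 * x / 7)).
  { rewrite <- exp_Ropp, <- exp_plus. f_equal. field. }
  assert (0 < exp (x / 2)) by apply exp_pos.
  assert (0 < exp (2 * x / 7)) by apply exp_pos.
  apply (Rmult_le_reg_r (exp (x / 2))); [lra|].
  unfold Rdiv at 1. rewrite Rmult_assoc, Rinv_l by lra. rewrite Rmult_1_r.
  eapply Rle_trans; [exact Hk2|]. rewrite H.
  assert (/ exp (2 * x / 7) <= / (1 + 2 * x / 7)) by (apply Rinv_le_contravar; lra).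
  unfold Rdiv. nra.
Qed.

Theorem mainTheorem2 (p : nat -> R)
  (Hlow : exists eps : R, 0 < eps /\ exists N : nat, forall n : nat, (N <= n)%nat ->
            Rpower (INR n) (- (exp 1 - 2) / (3 * exp 1 - 2) + eps) <= p n)
  (Hp0 : is_lim_seq p 0) :
  exists khat : nat -> R,
    (exists N : nat, forall n : nat, (N <= n)%nat -> gamma n (p n) (khat n) = 0)
    /\ is_lim_seq khat p_infty
    /\ is_lim_seq (fun n => khat n / sqrt (INR n)) 0
    /\ (forall k' : nat -> R,
          (exists N : nat, forall n : nat, (N <= n)%nat -> gamma n (p n) (k' n) = 0) ->
          is_lim_seq k' p_infty ->
          is_lim_seq (fun n => k' n / sqrt (INR n)) 0 ->
          exists N : nat, forall n : nat, (N <= n)%nat -> k' n = khat n)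
    /\ is_lim_seq (fun n => khat n - khat_approx n (p n)) 0
    /\ (forall k : nat -> nat,
          is_lim_seq (fun n => INR (k n)) p_infty ->
          is_lim_seq (fun n => INR (k n) / sqrt (INR n)) 0 ->
          is_lim_seq (fun n => EX n (p n) (k n) / exp (gamma n (p n) (INR (k n)))) 1).
Proof.
  assert (Hd1 : 0 < 1 <= 1) by lra.
  exists (khat_of p). split; [|split; [|split; [|split; [|split]]]].
  - destruct (ev_good_d p Hlow Hp0 1 0) as [N HN]. exists N. intros n Hn.
    apply (good_khat p n 1 Hd1 (proj1 (HN n Hn))).
  - apply is_lim_seq_spec. intros M.
    destruct (ev_good_d p Hlow Hp0 1 (Rabs M)) as [N HN]. exists N. intros n Hn.
    destruct (HN n Hn) as [HG HM].
    destruct (good_khat p n 1 Hd1 HG) as [Hk _].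
    pose proof (approx_bounds n (p n) 1 Hd1 HG) as [Ha _].
    destruct HG as [_ [_ [Hlp _]]].
    apply Rabs_le_between in Hk. pose proof (Rle_abs M).
    assert (0 <= ln (INR n)) by (pose proof (Rabs_pos M); lra). lra.
  - apply is_lim_seq_spec. intros eps.
    destruct (ev_good_d p Hlow Hp0 1 (112 / eps)) as [N HN]. exists N. intros n Hn.
    destruct (HN n Hn) as [HG HM]. rewrite Rminus_0_r.
    destruct (good_khat p n 1 Hd1 HG) as [Hk [Hk1 _]].
    pose proof (approx_bounds n (p n) 1 Hd1 HG) as [_ Ha].
    destruct HG as [Hp [Hn0 [Hlp Hbig]]].
    assert (Hx : 0 <= ln (INR n)) by (assert (0 < 1) by lra; nra).
    pose proof (cond_pos eps) as He.
    assert (H32 : 0 <= 112 / eps) by (apply Rlt_le, Rdiv_lt_0_compat; lra).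
    assert (Hip : / p n <= exp (ln (INR n) / 7)).
    { rewrite <- (exp_ln (p n)) by lra. rewrite <- exp_Ropp. 
      destruct (Req_dec (- ln (p n)) (ln (INR n) / 7)) as [E|E]; [rewrite E; lra|].
      left. apply exp_increasing. lra. }
    pose proof (sqrt_bound (ln (INR n)) (p n) (khat_of p n) Hx ltac:(lra) Hip) as Hsb.
    rewrite exp_ln in Hsb by lra.
    apply Rabs_le_between in Hk.
    specialize (Hsb ltac:(lra)).
    assert (Hsq : 0 < sqrt (INR n)) by (apply sqrt_lt_R0; lra).
    rewrite Rabs_pos_eq by (apply Rmult_le_pos; [lra | apply Rlt_le, Rinv_0_lt_compat; lra]).
    eapply Rle_lt_trans; [exact Hsb|].
    assert (112 / eps * eps = 112) by (field; lra).
    assert (112 <= ln (INR n) * eps) by nra.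
    apply (Rmult_lt_reg_r (1 + 2 * ln (INR n) / 7)); [lra|].
    unfold Rdiv at 1. rewrite Rmult_assoc, Rinv_l by lra. nra.
  - intros k' [N1 HN1] Hk'inf _.
    destruct (ev_good_d p Hlow Hp0 1 0) as [N2 HN2].
    destruct (lim_pinf_ev k' 1 Hk'inf) as [N3 HN3].
    exists (max N1 (max N2 N3)). intros n Hn.
    destruct (HN2 n ltac:(lia)) as [HG _].
    destruct (good_khat p n 1 Hd1 HG) as [_ [Hk1 Hk0]].
    apply (good_uniq n (p n) 1); auto.
    + left. apply HN3. lia.
    + apply HN1. lia.
  - apply is_lim_seq_spec. intros eps.
    pose proof (cond_pos eps) as He.
    set (δ := Rmin (eps / 2) 1).
    assert (Hd : 0 < δ <= 1).
    { unfold δ. split. apply Rmin_glb_lt; lra. apply Rmin_r. }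
    destruct (ev_good_d p Hlow Hp0 δ 0) as [N HN]. exists N. intros n Hn.
    destruct (HN n Hn) as [HG _]. rewrite Rminus_0_r.
    destruct (good_khat p n δ Hd HG) as [Hk _].
    assert (δ <= eps / 2) by apply Rmin_l. lra.
  - intros k Hk1 Hk2. apply EX_lim; auto.
    destruct (ev_good p Hlow Hp0 0) as [N HN]. exists N. intros n Hn.
    destruct (HN n Hn) as [Hp _]. lra.
Qed.
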